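(* Let $X$ be a compact metric space and $f\colon X\to X$ continuous. If $(X,f)$ has $\gamma$-restricted two-sided orbital limit shadowing, then $ICT_f\subseteq\gamma_f$.
   Context: A full trajectory is $\langle z_i\rangle_{i\in\mathbb Z}$ with $f(z_i)=z_{i+1}$. For two-sided sequences, $\omega(\langle x_i\rangle)=\bigcap_{M}\overline{\{x_n:n>M\}}$, $\alpha(\langle x_i\rangle)=\bigcap_M\overline{\{x_n:n<-M\}}$; for $x\in X$, $\omega(x)$ is the set of accumulation points of $x,f(x),f^2(x),\dots$. A two-sided asymptotic pseudo-orbit is $\langle x_i\rangle_{i\in\mathbb Z}$ with $d(f(x_i),x_{i+1})\to0$ as $i\to\pm\infty$. $\gamma$-restricted two-sided orbital limit shadowing: for every two-sided asymptotic pseudo-orbit $\langle x_i\rangle$ with $\alpha(\langle x_i\rangle)=\omega(\langle x_i\rangle)$ there is a full trajectory $\langle z_i\rangle$ with $\alpha(\langle z_i\rangle)=\alpha(\langle x_i\rangle)$ and $\omega(\langle z_i\rangle)=\omega(\langle x_i\rangle)$. $ICT_f$ is the set of nonempty closed internally chain transitive sets ($A$ is internally chain transitive if for all $a,b\in A$ and $\delta>0$ there exist $x_0=a,\dots,x_N=b$ in $A$, $N\ge1$, with $d(f(x_i),x_{i+1})<\delta$). The $\gamma$-limit set $\gamma(x)$ of $x\in X$: $y\in\gamma(x)$ iff $y\in\omega(x)$ and there exist a sequence $\langle y_i\rangle_{i\ge1}$ in $X$ and a strictly increasing sequence $\langle n_i\rangle$ in $\mathbb N$ with $f^{n_i}(y_i)=x$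 for each $i$ and $y_i\to y$. $\gamma_f=\{\gamma(x):x\in X\}$. *)

(* Defs.v *)
From HB Require Import structures.
From mathcomp Require Import all_boot all_order all_algebra.
From mathcomp Require Import all_classical all_reals all_analysis.
Set Implicit Arguments. Unset Strict Implicit. Unset Printing Implicit Defensive.
Import Order.TTheory GRing.Theory Num.Theory.
Local Open Scope classical_set_scope.
Local Open Scope ring_scope.

Section Dyn.
Context {R : realType} {X : metricType R}.
Implicit Types (f : X -> X).

Definition full_trajectory f (z : int -> X) : Prop :=
  forall i : int, f (z i) = z (i + 1).

Definition omega_seq (x : int -> X) : set X :=
  [set y | forall M : int, closure [set x n | n in [set n : int | M < n]] y].

Definition alpha_seq (x : int -> X) : set X :=
  [set y | forall M : int, closure [set x n | n in [set n : int | n < - M]] y].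

Definition omega_pt f (x : X) : set X :=
  [set y | forall N : nat, closure [set iter n f x | n in [set n : nat | (N <= n)%N]] y].

Definition two_sided_asymptotic_pseudo_orbit f (x : int -> X) : Prop :=
  forall e : R, 0 < e -> exists N : int, forall i : int,
    N <= `|i| -> mdist (f (x i)) (x (i + 1)) < e.

Definition gamma_restricted_two_sided_orbital_limit_shadowing f : Prop :=
  forall x : int -> X, two_sided_asymptotic_pseudo_orbit f x ->
    alpha_seq x = omega_seq x ->
    exists z : int -> X, full_trajectory f z /\
      alpha_seq z = alpha_seq x /\ omega_seq z = omega_seq x.

Definition internally_chain_transitive f (A : set X) : Prop :=
  forall a b : X, A a -> A b -> forall delta : R, 0 < delta ->
    exists (N : nat) (x : nat -> X), (1 <= N)%N /\ x 0%N = a /\ x N = b /\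
      (forall i : nat, (i <= N)%N -> A (x i)) /\
      (forall i : nat, (i < N)%N -> mdist (f (x i)) (x i.+1) < delta).

Definition ICT f : set (set X) :=
  [set A | A !=set0 /\ closed A /\ internally_chain_transitive f A].

Definition gamma_limit f (x : X) : set X :=
  [set y | omega_pt f x y /\
    exists (ys : nat -> X) (n : nat -> nat),
      (forall i : nat, (n i < n i.+1)%N) /\
      (forall i : nat, iter (n i) f (ys i) = x) /\
      (ys @ \oo --> y)].

Definition gamma_f f : set (set X) := [set gamma_limit f x | x in [set: X]].

End Dyn.

(* Main.v *)
Require Import Defs.
From HB Require Import structures.
From mathcomp Require Import all_boot all_order all_algebra.
From mathcomp Require Import all_classical all_reals all_analysis.
From mathcomp Require Import zify.
From mathcomp Require finmap.
Local Open Scope classical_set_scope.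
Local Open Scope ring_scope.
Import Order.TTheory GRing.Theory Num.Theory.
Set Implicit Arguments. Unset Strict Implicit.

Section Lists.
Variable T : eqType.

Fixpoint chn (e : T -> T -> Prop) (x : T) (s : seq T) : Prop :=
  if s is y :: s' then e x y /\ chn e y s' else True.

Lemma chn_cat e x s t : chn e x (s ++ t) <-> chn e x s /\ chn e (last x s) t.
Proof.
elim: s x => [|y s IH] x /=; first by split => // -[].
rewrite IH; tauto.
Qed.

Lemma chn_nth e x s i : chn e x s -> (i < size s)%N -> e (nth x (x :: s) i) (nth x s i).
Proof.
elim: s x i => [|y s IH] x i //= [exy hc].
case: i => [|i] //= hi.
have hi' : (i < size s)%N by [].
have := IH y i hc hi'.
rewrite (set_nth_default x y (s:=y :: s)) /=; last by lia.
by rewrite (set_nth_default x y hi').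
Qed.

Lemma chn_sub (e e' : T -> T -> Prop) x s :
  (forall u v, e u v -> e' u v) -> chn e x s -> chn e' x s.
Proof. by move=> H; elim: s x => [|y s IH] x //= [/H ? /IH]. Qed.

Lemma last_rev_belast (y : T) (s : seq T) : last (last y s) (rev (belast y s)) = y.
Proof.
case: s => [|w s] //=.
by rewrite rev_cons last_rcons.
Qed.

Lemma chn_rev e x s : chn e x s ->
  chn (fun u v => e v u) (last x s) (rev (belast x s)).
Proof.
elim: s x => [|y s IH] x //= [exy hc].
rewrite rev_cons -cats1 chn_cat; split; first exact: IH.
by rewrite last_rev_belast /=.
Qed.

Lemma chn_iota e (x : nat -> T) m n :
  (forall i, (m <= i < m + n)%N -> e (x i) (x i.+1)) ->
  chn e (x m) (map (fun i => x i.+1) (iota m n)).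
Proof.
elim: n m => [|n IH] m H //=; split.
  by apply: H; lia.
by apply: IH => i hi; apply: H; lia.
Qed.

Lemma last_iota (x : nat -> T) m n :
  last (x m) (map (fun i => x i.+1) (iota m n)) = x (m + n)%N.
Proof.
elim: n m => [|n IH] m /=; first by rewrite addn0.
by rewrite IH addSnnS.
Qed.

End Lists.


Section Word.
Variables (T : eqType) (a0 : T) (A : T -> Prop) (e : nat -> T -> T -> Prop)
  (c : nat -> seq T).
Hypotheses (hA0 : A a0) (hmono : forall K k u v, (K <= k)%N -> e k u v -> e K u v)
  (hne : forall k, c k != [::]) (hch : forall k, chn (e k) a0 (c k))
  (hl : forall k, last a0 (c k) = a0) (hin : forall k z, z \in c k -> A z).

Let P M := a0 :: flatten (map c (iota 0 M)).

Lemma size_flat L : (size L <= size (flatten (map c L)))%N.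
Proof.
elim: L => [|i L IH] //=; rewrite size_cat.
have : (0 < size (c i))%N by rewrite lt0n size_eq0 hne.
lia.
Qed.

Lemma size_P M : (M < size (P M))%N.
Proof. by have := size_flat (iota 0 M); rewrite size_iota /= ltnS. Qed.

Lemma P_add M d : P (M + d) = P M ++ flatten (map c (iota M d)).
Proof. by rewrite /P iotaD map_cat flatten_cat. Qed.

Lemma Pnth M d n : (n <= M)%N -> nth a0 (P (M + d)) n = nth a0 (P M) n.
Proof.
move=> hn; rewrite P_add nth_cat.
by rewrite ifT //; move: (size_P M) => /=; lia.
Qed.

Let W n := nth a0 (P n.+1) n.

Lemma W_P n M : (n <= M)%N -> W n = nth a0 (P M) n.
Proof.
move=> hn; rewrite /W -(Pnth n.+1 hn) -(Pnth M (leqnSn n)).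
by rewrite addnC.
Qed.

Lemma chain_flat K L : (forall i, i \in L -> (K <= i)%N) ->
  chn (e K) a0 (flatten (map c L)) /\ last a0 (flatten (map c L)) = a0.
Proof.
elim: L => [|i L IH] //= H.
rewrite chn_cat last_cat hl; have [h1 h2] := IH (fun j hj => H j ltac:(by rewrite inE hj orbT)).
split => //; split => //.
apply: chn_sub (hch i) => u v; apply: hmono; apply: H; exact: mem_head.
Qed.

Lemma P_in M z : z \in P M -> A z.
Proof.
rewrite inE => /orP [/eqP -> //|].
move/flattenP => [s /mapP [i _ ->]]; exact: hin.
Qed.

Lemma word_ex : exists W : nat -> T, [/\ W 0%N = a0, forall n, A (W n),
  (forall K, exists N, forall n, (N <= n)%N -> e K (W n) (W n.+1)) &
  (forall k z, z \in c k -> exists n, (k <= n)%N /\ W n = z)].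
Proof.
exists W; split => //.
- move=> n; rewrite /W; case: (ltnP n (size (P n.+1))) => h.
    by apply: (@P_in n.+1); exact: mem_nth.
  by rewrite nth_default.
- move=> K; set F := flatten (map c (iota 0 K)).
  exists (size F) => n hn.
  set T' := flatten (map c (iota K n.+2)).
  have E : P (K + n.+2) = belast a0 F ++ a0 :: T'.
    rewrite P_add -/T' -cat_rcons.
    have [_ lF] := @chain_flat 0%N (iota 0 K) (fun i _ => leq0n i).
    by have := lastI a0 F; rewrite lF => <-.
  have hK : forall i, i \in iota K n.+2 -> (K <= i)%N.
    by move=> i; rewrite mem_iota; lia.
  have [cT _] := @chain_flat K (iota K n.+2) hK.
  rewrite (W_P (M := K + n.+2)); last by lia.
  rewrite (W_P (n := n.+1) (M := K + n.+2)); last by lia.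
  rewrite E !nth_cat size_belast.
  have -> : (n < size F)%N = false by apply/negbTE; rewrite -leqNgt.
  have -> : (n.+1 < size F)%N = false by apply/negbTE; rewrite -leqNgt; lia.
  have -> : (n.+1 - size F = (n - size F).+1)%N by lia.
  apply: (@chn_nth T (e K) a0 T' (n - size F) cT).
  have := size_flat (iota K n.+2); rewrite size_iota -/T'; lia.
- move=> k z hz.
  exists (size (P k) + index z (c k))%N; split.
    by have := size_P k; lia.
  set n := (size (P k) + index z (c k))%N.
  have hk : (k.+1 <= n)%N by have := size_P k; lia.
  rewrite (W_P (M := n)) //.
  have En : n = (k + 1 + (n - k.+1))%N by lia.
  rewrite {1}En.
  rewrite P_add P_add.
  have -> : flatten (map c (iota k 1)) = c k by rewrite /= cats0.
  rewrite -catA nth_cat.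
  have -> : (size (P k) + index z (c k) < size (P k))%N = false.
    by apply/negbTE; rewrite -leqNgt leq_addr.
  rewrite addKn nth_cat index_mem hz.
  exact: nth_index.
Qed.

End Word.


Section Net.
Variables (R : realType) (X : metricType R) (x0 : X).
HB.instance Definition _ := isPointed.Build X x0.

Lemma net_ex (A : set X) (d : R) : compact A -> 0 < d ->
  exists ps : seq X, (forall p, p \in ps -> A p) /\
    forall y, A y -> exists2 p, p \in ps & ball p d y.
Proof.
rewrite compact_cover => cA d0.
have [] := cA X A (fun p => (ball p d)°).
- by move=> i _; exact: open_interior.
- move=> y Ay; exists y => //; exact: nbhsx_ballx.
move=> D' sD cov.
exists (finmap.enum_fset D'); split.
  move=> p hp; have := sD p hp; by rewrite in_setE.
move=> y /cov [p /= hp hb]; exists p => //.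
exact: interior_subset.
Qed.
End Net.

Section Dyn2.
Context {R : realType} {X : metricType R} (f : X -> X).

Definition dl (k : nat) : R := (k.+1%:R)^-1.

Lemma dl_gt0 k : 0 < dl k.
Proof. by rewrite /dl invr_gt0 ltr0Sn. Qed.

Lemma dl_le K k : (K <= k)%N -> dl k <= dl K.
Proof.
move=> h; rewrite /dl lef_pV2 ?posrE ?ltr0Sn // ler_nat; lia.
Qed.

Lemma dl_small e : 0 < e -> exists K, forall k, (K <= k)%N -> dl k < e.
Proof.
move=> e0; have [K _ HK] := near_infty_natSinv_lt (PosNum e0).
by exists K => k hk; apply: HK.
Qed.

Lemma ict_seq (A : set X) a b (d : R) : internally_chain_transitive f A ->
  A a -> A b -> 0 < d ->
  exists s, [/\ s != [::], chn (fun u v => mdist (f u) v < d) a s, last a s = b &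
    forall z, z \in s -> A z].
Proof.
move=> ict Aa Ab d0; have [N [x [hN [x0 [xN [hA hd]]]]]] := ict a b Aa Ab d d0.
exists (map (fun i => x i.+1) (iota 0 N)); split.
- by rewrite -size_eq0 size_map size_iota; lia.
- rewrite -x0; apply: chn_iota => i hi; apply: hd; lia.
- by rewrite -x0 last_iota.
- move=> z /mapP [i]; rewrite mem_iota => hi ->; apply: hA; lia.
Qed.

Lemma tour (A : set X) a0 (d : R) : internally_chain_transitive f A -> A a0 -> 0 < d ->
  forall (ps : seq X) (a : X), (forall p, p \in ps -> A p) -> A a ->
  exists s, [/\ s != [::], chn (fun u v => mdist (f u) v < d) a s, last a s = a0,
    (forall z, z \in s -> A z) & forall p, p \in ps -> p \in s].
Proof.
move=> ict A0 d0; elim => [|p ps IH] a hps Aa.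
  have [s [s0 c l hs]] := ict_seq ict Aa A0 d0.
  by exists s; split.
have Ap : A p by apply: hps; exact: mem_head.
have [s1 [s10 c1 l1 hs1]] := ict_seq ict Aa Ap d0.
have [s2 [s20 c2 l2 hs2 hp2]] := IH p (fun q hq => hps q ltac:(by rewrite inE hq orbT)) Ap.
exists (s1 ++ s2); split.
- by move: s10; rewrite -!size_eq0 size_cat; lia.
- by rewrite chn_cat l1.
- by rewrite last_cat l1.
- by move=> z; rewrite mem_cat => /orP [/hs1|/hs2].
- move=> q; rewrite inE => /orP [/eqP ->|/hp2 h]; rewrite mem_cat ?h ?orbT //.
  have : last a s1 \in s1 by move: s10; case: (s1) => // y s1' _ /=; exact: mem_last.
  by rewrite l1 => ->.
Qed.
End Dyn2.


Section Main.
Context {R : realType} {X : metricType R} (f : X -> X).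

Lemma blocks_ex (A : set X) a0 : compact [set: X] -> closed A ->
  internally_chain_transitive f A -> A a0 ->
  exists bl : nat -> seq X, forall k, [/\ bl k != [::],
    chn (fun u v => mdist (f u) v < dl k) a0 (bl k), last a0 (bl k) = a0,
    (forall z, z \in bl k -> A z) &
    forall y, A y -> exists2 p, p \in bl k & ball p (dl k) y].
Proof.
move=> cX clA ict A0.
have cA : compact A by apply: (subclosed_compact clA cX).
suff /choice [bl hbl] : forall k, exists s : seq X, [/\ s != [::],
    chn (fun u v => mdist (f u) v < dl k) a0 s, last a0 s = a0,
    (forall z, z \in s -> A z) &
    forall y, A y -> exists2 p, p \in s & ball p (dl k) y] by exists bl.
move=> k.
have [ps [hps hnet]] := net_ex a0 cA (dl_gt0 k).
have [s [s0 cs ls hs hin]] := tour ict A0 (dl_gt0 k) hps A0.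
exists s; split => // y /hnet [p /hin hp hb]; by exists p.
Qed.

Lemma cover_word (A : set X) (c : nat -> seq X) (W : nat -> X) :
  (forall k y, A y -> exists2 p, p \in c k & ball p (dl k) y) ->
  (forall k z, z \in c k -> exists n, (k <= n)%N /\ W n = z) ->
  forall y, A y -> forall e, 0 < e -> forall M, exists n, (M <= n)%N /\ ball y e (W n).
Proof.
move=> hnet hw y Ay e e0 M.
have [K hK] := dl_small e0.
have [p hp hb] := hnet (maxn K M) y Ay.
have [n [hn Wn]] := hw _ _ hp.
exists n; rewrite Wn; split; first by move: hn; rewrite geq_max => /andP [].
apply: (le_ball (e1 := dl (maxn K M))); first by apply/ltW/hK; rewrite leq_maxl.
exact: ball_sym.
Qed.


Lemma iter_z (z : int -> X) : full_trajectory f z ->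
  forall j (n : nat), iter n f (z j) = z (j + Posz n).
Proof.
move=> hz j; elim => [|n IH]; first by rewrite addr0.
rewrite iterS IH hz; congr z; lia.
Qed.

Lemma omega_ptE (z : int -> X) : full_trajectory f z ->
  omega_pt f (z 0) = omega_seq z.
Proof.
move=> hz; apply/seteqP; split => y hy.
- move=> M; apply: (closureS _ (hy `|M|.+1%N)).
  move=> w [n hn <-]; exists (Posz n).
    rewrite /=; move: hn; rewrite /=; lia.
  by rewrite (iter_z hz) add0r.
- move=> N; apply: (closureS _ (hy (Posz N - 1))).
  move=> w [n hn <-]; case: n hn => [k|k] /= hk; last by lia.
  by exists k; [rewrite /=; lia | rewrite (iter_z hz) add0r].
Qed.


Lemma gamma_eq (A : set X) (z : int -> X) : full_trajectory f z ->
  alpha_seq z = A -> omega_seq z = A -> gamma_limit f (z 0) = A.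
Proof.
move=> hz ha ho; apply/seteqP; split => y.
  by move=> [+ _]; rewrite omega_ptE // ho.
move=> Ay; split; first by rewrite omega_ptE // ho.
have hy : alpha_seq z y by rewrite ha.
have /choice [g hg] : forall mi : nat * nat, exists k : nat,
    (mi.1 < k)%N /\ ball y (dl mi.2) (z (- Posz k)).
  move=> [m i] /=.
  have := hy (Posz m) (ball y (dl i)) (nbhsx_ballx _ _ (dl_gt0 i)).
  move=> [w [[n hn <-] hb]]; case: n hn hb => [j|j] /= hj hb; first by lia.
  exists j.+1; split; first by lia.
  by rewrite NegzE in hb.
pose ns := fix ns (i : nat) : nat := if i is i'.+1 then g (ns i', i) else g (0%N, 0%N).
have hns : forall i, ball y (dl i) (z (- Posz (ns i))).
  by case => [|i]; [exact: (hg (0%N, 0%N)).2 | exact: (hg (ns i, i.+1)).2].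
exists (fun i => z (- Posz (ns i))), ns; split; [|split].
- by move=> i; exact: (hg (ns i, i.+1)).1.
- by move=> i; rewrite (iter_z hz) addNr.
- apply/cvg_ballP => e e0.
  have [K hK] := dl_small e0.
  exists K => // i /= hi.
  apply: (le_ball (e1 := dl i)); first exact/ltW/hK.
  exact: hns.
Qed.

End Main.

Lemma mem_belast_last (T : eqType) (a0 p : T) (s : seq T) :
  s != [::] -> last a0 s = a0 -> p \in s -> p \in belast a0 s.
Proof.
move=> s0 ls ps.
have : p \in a0 :: s by rewrite inE ps orbT.
rewrite lastI ls mem_rcons inE => /orP [/eqP ->|//].
by case: s s0 {ls ps} => // y s' _ /=; rewrite mem_head.
Qed.

Unset Implicit Arguments. Set Strict Implicit.

Theorem mainTheorem4 (R : realType) (X : metricType R) (f : X -> X) :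
  compact [set: X] -> continuous f ->
  gamma_restricted_two_sided_orbital_limit_shadowing f ->
  ICT f `<=` gamma_f f.
Proof.
move=> cX _ sh A [[a0 A0] [clA ict]].
have [bl hbl] := blocks_ex cX clA ict A0.
have hmonop : forall K k (u v : X), (K <= k)%N ->
    mdist (f u) v < dl k -> mdist (f u) v < dl K.
  by move=> K k u v hk h; apply: lt_le_trans h (dl_le hk).
have hmonom : forall K k (u v : X), (K <= k)%N ->
    mdist (f v) u < dl k -> mdist (f v) u < dl K.
  by move=> K k u v hk h; apply: lt_le_trans h (dl_le hk).
have [Wp [Wp0 WpA Wpch Wpin]] := @word_ex X a0 A
  (fun k u v => mdist (f u) v < dl k) bl A0 hmonop
  (fun k => let: And5 h _ _ _ _ := hbl k in h)
  (fun k => let: And5 _ h _ _ _ := hbl k in h)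
  (fun k => let: And5 _ _ h _ _ := hbl k in h)
  (fun k => let: And5 _ _ _ h _ := hbl k in h).
pose c' k := rev (belast a0 (bl k)).
have [Wm [Wm0 WmA Wmch Wmin]] : exists W : nat -> X, [/\ W 0%N = a0, forall n, A (W n),
  (forall K, exists N, forall n, (N <= n)%N -> mdist (f (W n.+1)) (W n) < dl K) &
  (forall k z, z \in c' k -> exists n, (k <= n)%N /\ W n = z)].
  apply: (@word_ex X a0 A (fun k u v => mdist (f v) u < dl k) c' A0 hmonom).
  - move=> k; have [s0 _ _ _ _] := hbl k.
    by rewrite -size_eq0 size_rev size_belast size_eq0.
  - move=> k; have [_ cs ls _ _] := hbl k.
    by have := chn_rev cs; rewrite ls.
  - move=> k; have [_ _ ls _ _] := hbl k.
    by have := last_rev_belast a0 (bl k); rewrite ls.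
  - move=> k z; have [_ _ _ hs _] := hbl k.
    rewrite mem_rev => /mem_belast; rewrite inE => /orP [/eqP ->|/hs] //.
have covp := @cover_word _ _ A bl Wp (fun k => let: And5 _ _ _ _ h := hbl k in h) Wpin.
have covm : forall y, A y -> forall e, 0 < e -> forall M, exists n, (M <= n)%N /\ ball y e (Wm n).
  apply: (@cover_word _ _ A c' Wm) => // k y Ay.
  have [s0 _ ls _ hnet] := hbl k.
  have [p hp hb] := hnet y Ay; exists p => //.
  by rewrite mem_rev; apply: mem_belast_last.
pose x (i : int) : X := match i with Posz n => Wp n | Negz n => Wm n.+1 end.
have hxA : forall i, A (x i) by case => n; [exact: WpA | exact: WmA].
have hpo : two_sided_asymptotic_pseudo_orbit f x.
  move=> e e0; have [K hK] := dl_small e0.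
  have [Np hNp] := Wpch K; have [Nm hNm] := Wmch K.
  exists (Posz (maxn Np Nm).+1) => -[n|n] hn.
  - have -> : Posz n + 1 = Posz n.+1 by lia.
    apply: (lt_trans (hNp n _)); first by move: hn => /=; lia.
    exact: hK.
  - have -> : x (Negz n + 1) = Wm n.
      case: n hn => [|n] hn.
        have -> : Negz 0 + 1 = Posz 0 by lia.
        by rewrite /= Wp0 Wm0.
      have -> : Negz n.+1 + 1 = Negz n by rewrite !NegzE; lia.
      by [].
    apply: (lt_trans (hNm n _)); first by move: hn; rewrite NegzE normrN /=; lia.
    exact: hK.
have hsub : forall (s : set X), s `<=` A -> closure s `<=` A.
  by move=> s sA; apply: subset_trans (closureS sA) clA.
have homega : omega_seq x = A.
  apply/seteqP; split => y.
    move=> /(_ 0); apply: hsub => w [n _ <-]; exact: hxA.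
  move=> Ay M B /nbhs_ballP [e /= e0 hB].
  have [n [hn hb]] := covp y Ay e e0 `|M|.+1%N.
  exists (Wp n); split; last exact: hB.
  by exists (Posz n) => //=; lia.
have halpha : alpha_seq x = A.
  apply/seteqP; split => y.
    move=> /(_ 0); apply: hsub => w [n _ <-]; exact: hxA.
  move=> Ay M B /nbhs_ballP [e /= e0 hB].
  have [n [hn hb]] := covm y Ay e e0 `|M|.+1%N.
  exists (Wm n); split; last exact: hB.
  case: n hn hb => [|n] hn hb; first by lia.
  by exists (Negz n) => //=; rewrite NegzE; lia.
have hao : alpha_seq x = omega_seq x by rewrite halpha homega.
have [z [hz [ha ho]]] := sh x hpo hao.
exists (z 0) => //.
by apply: gamma_eq => //; rewrite ?ha ?ho.
Qed.
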